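(* Let $\Sigma_{\mathrm{ID}}$ be a set of unary inclusion dependencies and $\Sigma_{\mathrm{FD}}$ a set of functional dependencies. Let $I$ and $N$ be instances and $\Delta:=\mathrm{Adom}(I)\cap\mathrm{Adom}(N)$. Assume that $I$ satisfies $\Sigma_{\mathrm{FD}}\cup\Sigma_{\mathrm{ID}}$, that $I\cup N$ satisfies $\Sigma_{\mathrm{FD}}$, and that whenever $a\in\Delta$ occurs at a position $(R,i)$ in $N$ then it also occurs at position $(R,i)$ in $I$. Let $W$ denote the result of chasing $N$ by $\Sigma_{\mathrm{ID}}$ where no trigger mapping an exported variable to an element of $\Delta$ is ever fired. Then $I\cup W$ satisfies $\Sigma_{\mathrm{ID}}\cup\Sigma_{\mathrm{FD}}$.
   Context: A unary inclusion dependency (UID) is a TGD $R(\vec x)\rightarrow\exists\vec y\,S(\vec z)$ with single body and head atoms, no repeated variables, and exactly one exported variable (variable of the body occurring in the head). A functional dependency $D\rightarrow j$ on $R$ asserts that two $R$-facts agreeing on positions in $D$ agree on position $j$. $\mathrm{Adom}(I)$ is the set of values occurring in $I$; an element $a$ occurs at position $(R,i)$ in an instance if some $R$-fact has $a$ as its $i$-th argument. A trigger for a TGD in an instance is a homomorphism from its body to the instance; it is active if it does not extend to a homomorphism of the head. The chase repeatedly fires active triggers (fairly, in rounds), adding facts that instantiate the head with fresh elements (nulls) for existential variables; the result may be infinite.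
   Formalization: Every functional dependency $D\rightarrow j$ in $\Sigma_{\mathrm{FD}}$ has a nonempty set $D$ of left-hand positions, so empty determinants are excluded. The statement above fails without it. *)

(* Defs.v *)
From Stdlib Require Import List Arith.
Import ListNotations.
Set Implicit Arguments.

Section Relational.

Variable rel : Type.
Variable ar : rel -> nat.

(* A fact R(a_0,...,a_{n-1}); positions are 0-based. *)
Record fact (E : Type) := mkFact { frel : rel; fargs : list E }.

Definition instance (E : Type) := fact E -> Prop.

Definition wf_fact E (f : fact E) : Prop := length (fargs f) = ar (frel f).
Definition wf_inst E (K : instance E) : Prop := forall f, K f -> wf_fact f.

Definition union E (K1 K2 : instance E) : instance E := fun f => K1 f \/ K2 f.

Definition adom E (K : instance E) (a : E) : Prop :=
  exists f, K f /\ In a (fargs f).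

Definition occurs_at E (K : instance E) (r : rel) (i : nat) (a : E) : Prop :=
  exists f, K f /\ frel f = r /\ nth_error (fargs f) i = Some a.

(* A UID  R(x_0..x_{n-1}) -> exists y, S(z_0..z_{m-1}) with no repeated
   variables and exactly one exported variable is determined (up to variable
   renaming) by the body relation R, the position i of the exported variable
   in the body, the head relation S and the position j of the exported
   variable in the head: R[i] ⊆ S[j]. *)
Record UID := mkUID { u_body : rel; u_bpos : nat; u_head : rel; u_hpos : nat }.

Definition uid_wf (u : UID) : Prop :=
  u_bpos u < ar (u_body u) /\ u_hpos u < ar (u_head u).

(* Triggers of u in K: R-facts f (homomorphisms of the body, which has no
   repeated variables); the exported element is a = f[i].  The trigger is
   active iff it does not extend to the head, i.e. iff a does not occur at
   (S,j) in K (the head has no repeated variables). *)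
Definition trigger E (K : instance E) (u : UID) (f : fact E) (a : E) : Prop :=
  K f /\ frel f = u_body u /\ nth_error (fargs f) (u_bpos u) = Some a.

Definition active E (K : instance E) (u : UID) (f : fact E) (a : E) : Prop :=
  trigger K u f a /\ ~ occurs_at K (u_head u) (u_hpos u) a.

Definition sat_uid E (K : instance E) (u : UID) : Prop :=
  forall f a, trigger K u f a -> occurs_at K (u_head u) (u_hpos u) a.

Record FD := mkFD { fd_rel : rel; fd_lhs : list nat; fd_rhs : nat }.

Definition fd_wf (d : FD) : Prop :=
  (forall p, In p (fd_lhs d) -> p < ar (fd_rel d)) /\ fd_rhs d < ar (fd_rel d).

Definition sat_fd E (K : instance E) (d : FD) : Prop :=
  forall f g, K f -> K g -> frel f = fd_rel d -> frel g = fd_rel d ->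
    (forall p, In p (fd_lhs d) -> nth_error (fargs f) p = nth_error (fargs g) p) ->
    nth_error (fargs f) (fd_rhs d) = nth_error (fargs g) (fd_rhs d).

Inductive elem (V : Type) := Const (v : V) | Null (n : nat).

Definition lift V (K : instance V) : instance (elem V) :=
  fun f => exists f0, K f0 /\ f = mkFact (frel f0) (map (@Const V) (fargs f0)).

Definition Delta V (I N : instance V) (a : V) : Prop := adom I a /\ adom N a.

Definition in_Delta V (Dl : V -> Prop) (a : elem V) : Prop :=
  exists v, a = Const v /\ Dl v.

Definition fresh_head V (K : instance (elem V)) (u : UID) (a : elem V)
    (g : fact (elem V)) : Prop :=
  frel g = u_head u /\ length (fargs g) = ar (u_head u) /\
  nth_error (fargs g) (u_hpos u) = Some a /\
  (forall p b, p <> u_hpos u -> nth_error (fargs g) p = Some b ->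
      (exists n, b = Null V n) /\ ~ adom K b) /\
  (forall p q b, p <> u_hpos u -> q <> u_hpos u -> p <> q ->
      nth_error (fargs g) p = Some b -> nth_error (fargs g) q = Some b -> False).

(* One chase step by SigID, never firing a trigger whose exported element is
   in Dl (a stutter step K' = K is allowed, e.g. once the chase terminates). *)
Definition chase_step V (SigID : UID -> Prop) (Dl : V -> Prop)
    (K K' : instance (elem V)) : Prop :=
  (forall h, K' h <-> K h) \/
  exists u f a g,
    SigID u /\ active K u f a /\ ~ in_Delta Dl a /\ fresh_head K u a g /\
    (forall h, K' h <-> K h \/ h = g).

Definition chase_seq V (SigID : UID -> Prop) (Dl : V -> Prop)
    (N : instance V) (Ws : nat -> instance (elem V)) : Prop :=
  (forall h, Ws 0 h <-> lift N h) /\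
  (forall k, chase_step SigID Dl (Ws k) (Ws (S k))) /\
  (forall k u f a, SigID u -> active (Ws k) u f a -> ~ in_Delta Dl a ->
     exists k', k <= k' /\ ~ active (Ws k') u f a).

Definition chase_result V (Ws : nat -> instance (elem V)) : instance (elem V) :=
  fun f => exists k, Ws k f.

End Relational.

(* Main.v *)
Require Import Defs.
From Stdlib Require Import List Arith.
Import ListNotations.
From Stdlib Require Import Classical Lia.

Lemma optmap_inj (A B : Type) (c : A -> B) (x y : option A) :
  (forall a b, c a = c b -> a = b) -> option_map c x = option_map c y -> x = y.
Proof.
  intros Hc H; destruct x, y; simpl in H; try discriminate; auto.
  injection H; intro E; rewrite (Hc _ _ E); auto.
Qed.

Theorem mainTheorem20
  (rel : Type) (ar : rel -> nat) (V : Type)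
  (SigID : UID rel -> Prop) (SigFD : FD rel -> Prop)
  (I N : instance rel V) (Ws : nat -> instance rel (elem V)) :
  (forall u, SigID u -> uid_wf ar u) ->
  (forall d, SigFD d -> fd_wf ar d) ->
  (forall d, SigFD d -> fd_lhs d <> []) ->
  wf_inst ar I -> wf_inst ar N ->
  (forall u, SigID u -> sat_uid I u) ->
  (forall d, SigFD d -> sat_fd I d) ->
  (forall d, SigFD d -> sat_fd (union I N) d) ->
  (forall a r i, Delta I N a -> occurs_at N r i a -> occurs_at I r i a) ->
  chase_seq ar SigID (Delta I N) N Ws ->
  (forall u, SigID u -> sat_uid (union (lift I) (chase_result Ws)) u) /\
  (forall d, SigFD d -> sat_fd (union (lift I) (chase_result Ws)) d).
Proof.
  intros HUwf HFwf HFne HwfI HwfN HIu HIf HINf HDelta [H0 [Hstep Hfair]].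
  assert (Hmono1: forall k h, Ws k h -> Ws (S k) h).
  { intros k h Hh. destruct (Hstep k) as [E|[u [f [a [g [_ [_ [_ [_ E]]]]]]]]];
      apply E; auto. }
  assert (Hmono: forall k k', k <= k' -> forall h, Ws k h -> Ws k' h).
  { intros k k' Hle; induction Hle; auto. }
  pose (fired := fun k g => exists u f a, SigID u /\ active (Ws k) u f a /\
     ~ in_Delta (Delta I N) a /\ fresh_head ar (Ws k) u a g /\
     (forall h, Ws (S k) h <-> Ws k h \/ h = g)).
  assert (Hgen: forall k h, Ws k h -> lift N h \/ exists k0, k0 < k /\ fired k0 h).
  { induction k; intros h Hh.
    - left; apply H0; auto.
    - destruct (Hstep k) as [E|[u [f [a [g [Hu [Ha [Hd [Hg E]]]]]]]]].
      + apply E in Hh. destruct (IHk h Hh) as [?|[k0 [? ?]]]; auto.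
        right; exists k0; split; auto; lia.
      + apply E in Hh; destruct Hh as [Hh| ->].
        * destruct (IHk h Hh) as [?|[k0 [? ?]]]; auto.
          right; exists k0; split; auto; lia.
        * right; exists k; split; [lia|]. exists u, f, a; auto. }
  assert (Cinv: forall k v, adom (Ws k) (Const v) -> adom N v).
  { induction k.
    - intros v [f [Hf Hin]]. apply H0 in Hf. destruct Hf as [f0 [Hf0 ->]].
      simpl in Hin. apply in_map_iff in Hin. destruct Hin as [x [Hx Hin]].
      injection Hx; intros ->. exists f0; auto.
    - destruct (Hstep k) as [E|[u [f [a [g [Hu [Ha [Hd [Hg E]]]]]]]]].
      + intros v [h [Hh Hin]]. apply IHk. exists h. split; [apply E|]; auto.
      + intros v [h [Hh Hin]]. apply E in Hh. destruct Hh as [Hh| ->].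
        * apply IHk; exists h; auto.
        * destruct (In_nth_error _ _ Hin) as [p Hp].
          destruct Hg as [Hgr [Hgl [Hga [Hgn Hgd]]]].
          destruct (Nat.eq_dec p (u_hpos u)) as [->|Hne].
          -- rewrite Hga in Hp. injection Hp; intros ->. apply IHk.
             destruct Ha as [[Hf [Hfr Hfa]] _]. exists f; split; auto.
             eapply nth_error_In; eauto.
          -- destruct (Hgn p _ Hne Hp) as [[n Hn] _]. discriminate. }
  assert (Dinv: forall k v r i, Delta I N v -> occurs_at (Ws k) r i (Const v) ->
                  occurs_at N r i v).
  { induction k.
    - intros v r i _ [f [Hf [Hr Hi]]]. apply H0 in Hf. destruct Hf as [f0 [Hf0 ->]].
      simpl in *. rewrite nth_error_map in Hi.
      destruct (nth_error (fargs f0) i) eqn:Ei; simpl in Hi; [|discriminate].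
      injection Hi; intros ->. exists f0; auto.
    - destruct (Hstep k) as [E|[u [f [a [g [Hu [Ha [Hd [Hg E]]]]]]]]].
      + intros v r i Hv [h [Hh Hi]]. apply (IHk v r i Hv). exists h.
        split; [apply E|]; auto.
      + intros v r i Hv [h [Hh Hi]]. apply E in Hh. destruct Hh as [Hh| ->].
        * apply (IHk v r i Hv). exists h; auto.
        * destruct Hi as [Hr Hp].
          destruct Hg as [Hgr [Hgl [Hga [Hgn Hgd]]]].
          destruct (Nat.eq_dec i (u_hpos u)) as [->|Hne].
          -- rewrite Hga in Hp. injection Hp; intros ->. exfalso; apply Hd.
             exists v; auto.
          -- destruct (Hgn i _ Hne Hp) as [[n Hn] _]. discriminate. }
  assert (L_gen: forall k g, fired k g -> forall h p, Ws k h -> frel h = frel g ->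
     nth_error (fargs g) p <> None -> nth_error (fargs h) p = nth_error (fargs g) p -> False).
  { intros k g [u [f [a [Hu [[Htr Hna] [Hd [Hg E]]]]]]] h p Hh Hr Hnn Hp.
    destruct Hg as [Hgr [Hgl [Hga [Hgn Hgd]]]].
    destruct (Nat.eq_dec p (u_hpos u)) as [->|Hne].
    - apply Hna. exists h. split; auto. split; [congruence|]. rewrite Hp; auto.
    - destruct (nth_error (fargs g) p) as [b|] eqn:Eb; [|congruence].
      destruct (Hgn p b Hne Eb) as [_ Hb]. apply Hb. exists h; split; auto.
      eapply nth_error_In; eauto. }
  assert (L_genI: forall k g, fired k g -> forall h p, lift I h -> frel h = frel g ->
     nth_error (fargs g) p <> None -> nth_error (fargs h) p = nth_error (fargs g) p -> False).
  { intros k g [u [f [a [Hu [[Htr Hna] [Hd [Hg E]]]]]]] h p [f0 [Hf0 ->]] Hr Hnn Hp.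
    simpl in Hp; rewrite nth_error_map in Hp.
    destruct Hg as [Hgr [Hgl [Hga [Hgn Hgd]]]].
    destruct (Nat.eq_dec p (u_hpos u)) as [->|Hne].
    - rewrite Hga in Hp.
      destruct (nth_error (fargs f0) (u_hpos u)) as [v|] eqn:Ev; simpl in Hp; [|discriminate].
      injection Hp; intros Hav. apply Hd. exists v. split; auto. split.
      + exists f0; split; auto; eapply nth_error_In; eauto.
      + apply (Cinv k). rewrite Hav. destruct Htr as [Hf [Hfr Hfa]].
        exists f; split; auto; eapply nth_error_In; eauto.
    - destruct (nth_error (fargs g) p) as [b|] eqn:Eb; [|congruence].
      destruct (Hgn p b Hne Eb) as [[n ->] _].
      destruct (nth_error (fargs f0) p); simpl in Hp; discriminate. }
  assert (Huniq: forall k g1 g2, fired k g1 -> fired k g2 -> g1 = g2).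
  { intros k g1 g2 H1 H2. pose proof H2 as H2'.
    destruct H1 as [u1 [f1 [a1 [_ [_ [_ [_ E1]]]]]]].
    destruct H2 as [u2 [f2 [a2 [_ [_ [_ [[_ [_ [Hga2 _]]] E2]]]]]]].
    assert (Hs: Ws (S k) g2) by (apply E2; auto).
    apply E1 in Hs. destruct Hs as [Hs|Hs]; auto.
    exfalso. apply (L_gen k g2 H2' g2 (u_hpos u2)); auto. congruence. }
  assert (Hfws: forall k g, fired k g -> Ws (S k) g).
  { intros k g [u [f [a [_ [_ [_ [_ E]]]]]]]. apply E; auto. }
  assert (Hfnn: forall k g p, fired k g -> p < ar (frel g) -> nth_error (fargs g) p <> None).
  { intros k g p [u [f [a [_ [_ [_ [[Hgr [Hgl _]] _]]]]]]] Hp.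
    apply nth_error_Some. rewrite Hgl, <- Hgr. auto. }
  assert (Hcls: forall f, union (lift I) (chase_result Ws) f ->
     lift I f \/ lift N f \/ exists k, fired k f).
  { intros f [Hf|[k Hf]]; auto. destruct (Hgen k f Hf) as [?|[k0 [_ ?]]]; eauto. }
  assert (HliftI: forall u v, SigID u -> occurs_at I (u_body u) (u_bpos u) v ->
     occurs_at (union (lift I) (chase_result Ws)) (u_head u) (u_hpos u) (Const v)).
  { intros u v Hu [f0 [Hf0 [Hfr Ev]]].
    destruct (HIu u Hu f0 v (conj Hf0 (conj Hfr Ev))) as [g0 [Hg0 [Hg0r Hg0a]]].
    exists (mkFact (frel g0) (map (@Const V) (fargs g0))). split.
    - left; exists g0; auto.
    - simpl; split; auto. rewrite nth_error_map, Hg0a; reflexivity. }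
  split.
  - intros u Hu f a Htr. destruct Htr as [Hf [Hfr Hfa]]. destruct Hf as [Hf|[k Hf]].
    + destruct Hf as [f0 [Hf0 ->]]. simpl in *. rewrite nth_error_map in Hfa.
      destruct (nth_error (fargs f0) (u_bpos u)) as [v|] eqn:Ev; simpl in Hfa; [|discriminate].
      injection Hfa; intros <-. apply HliftI; auto. exists f0; auto.
    + destruct (classic (in_Delta (Delta I N) a)) as [[v [-> Hv]]|Hnd].
      * apply HliftI; auto. apply HDelta; auto.
        apply (Dinv k v _ _ Hv). exists f; auto.
      * destruct (classic (occurs_at (Ws k) (u_head u) (u_hpos u) a)) as [Ho|Hno].
        -- destruct Ho as [g [Hg R]]; exists g; split; [right; exists k; auto| auto].
        -- destruct (Hfair k u f a Hu (conj (conj Hf (conj Hfr Hfa)) Hno) Hnd)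
             as [k' [Hle Hna]].
           apply NNPP; intro Hno'. apply Hna. split.
           ++ split; [apply (Hmono k k' Hle); auto| auto].
           ++ intros [g [Hg R]]. apply Hno'. exists g; split; [right; exists k'; auto|auto].
  - intros d Hd f1 f2 Hf1 Hf2 Hr1 Hr2 Hagree.
    assert (exists p, In p (fd_lhs d)) as [p Hin].
    { destruct (fd_lhs d) as [|p L] eqn:EL.
      - exfalso; apply (HFne d Hd); exact EL.
      - exists p; left; reflexivity. }
    pose proof (Hagree p Hin) as Hp.
    assert (Hplen: p < ar (fd_rel d)) by (apply (proj1 (HFwf d Hd)); auto).
    assert (Hbase: forall f, lift I f \/ lift N f ->
              exists f0, union I N f0 /\ f = mkFact (frel f0) (map (@Const V) (fargs f0))).
    { intros f [[f0 [? ?]]|[f0 [? ?]]]; exists f0; split; auto; [left|right]; auto. }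
    assert (HNws: forall k f, lift N f -> Ws k f).
    { intros k f Hf. apply (Hmono 0 k ltac:(lia)). apply H0; auto. }
    destruct (Hcls f1 Hf1) as [HA1|[HA1|[k1 HB1]]];
    destruct (Hcls f2 Hf2) as [HA2|[HA2|[k2 HB2]]].
    all: try (destruct (Hbase f1 ltac:(auto)) as [x1 [Hx1 ->]];
              destruct (Hbase f2 ltac:(auto)) as [x2 [Hx2 ->]];
              simpl in *; rewrite !nth_error_map; f_equal;
              apply (HINf d Hd x1 x2); auto;
              intros q Hq; specialize (Hagree q Hq); rewrite !nth_error_map in Hagree;
              apply optmap_inj in Hagree; auto;
              intros a b Hab; injection Hab; auto).
    all: try (exfalso; apply (L_genI _ f2 HB2 f1 p); auto;
              [congruence | apply (Hfnn _ _ _ HB2); congruence]).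
    all: try (exfalso; apply (L_gen _ f2 HB2 f1 p); auto;
              [congruence | apply (Hfnn _ _ _ HB2); congruence]).
    all: try (exfalso; apply (L_genI _ f1 HB1 f2 p); auto;
              [congruence | apply (Hfnn _ _ _ HB1); congruence]).
    all: try (exfalso; apply (L_gen _ f1 HB1 f2 p); auto;
              [congruence | apply (Hfnn _ _ _ HB1); congruence]).
    destruct (lt_eq_lt_dec k1 k2) as [[Hlt | ->]|Hlt].
    + exfalso; apply (L_gen _ f2 HB2 f1 p); auto;
        [apply (Hmono (S k1)); auto | congruence | apply (Hfnn _ _ _ HB2); congruence].
    + rewrite (Huniq _ _ _ HB1 HB2). reflexivity.
    + exfalso; apply (L_gen _ f1 HB1 f2 p); auto;
        [apply (Hmono (S k2)); auto | congruence | apply (Hfnn _ _ _ HB1); congruence].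
Qed.
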